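(* Let $G$ be a finite non-abelian group, $g\in G$, and let $\mathfrak{M}_g$ be the set of maximal subgroups $M$ of $G$ with $g^G\cap M\neq\emptyset$. Assume that for every $M\in\mathfrak{M}_g$ there exists $m\in M$ such that $g^G\cap M\subseteq m^M\subseteq g^G$. If $g^G$ is of type D, then there exist $N\in\mathfrak{M}_g$ and $n\in N$ such that $n^N$ is of type D.
   Context: For $h$ in a group $H$, $h^H$ denotes the conjugacy class of $h$ in $H$. A conjugacy class $\mathcal{O}$ of a group (regarded as a rack with $x\triangleright y=xyx^{-1}$) is of type D iff there exist $r,s\in\mathcal{O}$ with $(rs)^2\neq(sr)^2$ such that $r$ and $s$ are not conjugate in the subgroup $\langle r,s\rangle$. (In rack terms: a rack is of type D if it contains a subrack that is a disjoint union $R\sqcup S$ of two subracks with $r\triangleright(s\triangleright(r\triangleright s))\neq s$ for some $r\in R$, $s\in S$.) *)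

(* Defs.v *)
From mathcomp Require Import all_boot all_fingroup all_solvable.
Set Implicit Arguments. Unset Strict Implicit. Unset Printing Implicit Defensive.
Local Open Scope group_scope.

Definition typeD (gT : finGroupType) (O : {set gT}) : Prop :=
  exists r s : gT, [/\ r \in O, s \in O, (r * s) ^+ 2 != (s * r) ^+ 2
                     & s \notin r ^: <<[set r; s]>>].

(* Main.v *)
Require Import Defs.
From mathcomp Require Import all_boot all_fingroup all_solvable.
Local Open Scope group_scope.

Theorem lemma2p4 (gT : finGroupType) (G : {group gT}) (g : gT) :
  ~~ abelian G -> g \in G ->
  (forall M : {group gT}, maximal M G -> g ^: G :&: M != set0 ->
     exists2 m, m \in M & (g ^: G :&: M \subset m ^: M) && (m ^: M \subset g ^: G)) ->
  typeD (g ^: G) ->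
  exists N : {group gT}, [/\ maximal N G, g ^: G :&: N != set0 &
     exists2 n, n \in N & typeD (n ^: N)].
Proof.
move=> _ gG hyp [r [s [rC sC ne nconj]]].
have rG : r \in G by apply: (subsetP (class_subG gG (subxx G))).
have sG : s \in G by apply: (subsetP (class_subG gG (subxx G))).
set H := <<[set r; s]>>%G.
have HG : H \subset G by rewrite gen_subG subUset !sub1set rG sG.
have rH : r \in H by apply: mem_gen; rewrite !inE eqxx.
have sH : s \in H by apply: mem_gen; rewrite !inE eqxx orbT.
case: (maximal_exists HG) => [HeG | [M maxM HM]].
  exfalso; move: nconj; rewrite /= -/H.
  have -> : (r ^: H) = r ^: G by rewrite HeG.
  move/class_eqP: rC => ->; by rewrite sC.
have rM : r \in M by apply: (subsetP HM).
have sM : s \in M by apply: (subsetP HM).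
have ne0 : g ^: G :&: M != set0.
  by apply/set0Pn; exists r; rewrite inE rC rM.
have [m mM /andP [h1 h2]] := hyp M maxM ne0.
exists M; split=> //; exists m => //.
exists r, s; split=> //.
- by apply: (subsetP h1); rewrite inE rC rM.
- by apply: (subsetP h1); rewrite inE sC sM.
Qed.
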